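(* Let $d\ge 1$ and let $D=\{(x_i,y_i)\mid i=1,\dots,n\}$ be a finite dataset with $x_i\in\mathbb{R}^d$, $y_i\in\mathbb{R}$, such that for all $i,j$, $y_i\neq y_j$ implies $x_i\neq x_j$. Then there exists a convex-area-wise linear function $f\in CALF(\mathbb{R}^d)$ fitting $D$, i.e. with $f(x_i)=y_i$ for all $i=1,\dots,n$. Furthermore, there exist $d\ge 1$ and a function $f:\mathbb{R}^d\to\mathbb{R}$ such that $f\in CALF(\mathbb{R}^d)$ but $f$ is not a PLDC function.
   Context: A linear (affine) function on $\mathbb{R}^d$ is one of the form $f(x)=\beta_0+\beta_1x_1+\dots+\beta_dx_d$. A convex area is a set of the form $C=\bigcap_{k=1}^{m}\{x\in\mathbb{R}^d\mid \alpha_k\cdot x+\gamma_k\le 0\}$ with $m\ge 1$, $\alpha_k\in\mathbb{R}^d$, $\gamma_k\in\mathbb{R}$. Convex-area-wise linear function (CALF): for $\Omega\subseteq\mathbb{R}^d$, let $H=\{(f_i,C_i)\mid 0\le i\le M\}$ ($M\ge 0$ an integer) where each $f_i$ is a linear function, $C_1,\dots,C_M$ are pairwise disjoint convex areas, and $C_0=\Omega\setminus\bigcup_{i=1}^M C_i$. The function $f_H:\Omega\to\mathbb{R}$, $f_H(x)=\sum_{i=0}^M I_i(x)f_i(x)$, where $I_i$ is the indicator function of $C_i$, is called a convex-area-wise linear function; $CALF(\Omega)$ denotes the set of all such functions (over all choices of $M$ and $H$). PLDC function: a function $f:\mathbb{R}^d\to\mathbb{R}$ is PLDC if there exist $K\in\mathbb{Z}^+$,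 $\alpha_k,\beta_k\in\mathbb{R}^d$ and $c_k,c'_k\in\mathbb{R}$ ($k=1,\dots,K$) such that $f(x)=\max_{1\le k\le K}\{\alpha_k\cdot x+c_k\}-\max_{1\le k\le K}\{\beta_k\cdot x+c'_k\}$ for all $x$. *)

(* Defs.v *)
From HB Require Import structures.
From mathcomp Require Import all_boot all_order all_algebra.
From mathcomp Require Import boolp classical_sets reals.
Set Implicit Arguments. Unset Strict Implicit. Unset Printing Implicit Defensive.
Import Order.TTheory GRing.Theory Num.Theory.
Local Open Scope ring_scope.
Local Open Scope classical_set_scope.

Section CALFDefs.
Variables (R : realType) (d : nat).

Definition dotv (a x : 'rV[R]_d) : R := \sum_(i < d) a 0 i * x 0 i.

Definition affine_fun (f : 'rV[R]_d -> R) : Prop :=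
  exists (b0 : R) (b : 'rV[R]_d), forall x, f x = b0 + dotv b x.

Definition convex_area (C : set 'rV[R]_d) : Prop :=
  exists (m : nat) (alpha : 'I_m -> 'rV[R]_d) (gamma : 'I_m -> R),
    (0 < m)%N /\ C = [set x | forall k : 'I_m, dotv (alpha k) x + gamma k <= 0].

Definition indic_set (A : set 'rV[R]_d) (x : 'rV[R]_d) : R :=
  if `[< A x >] then 1 else 0.

Definition CALF (Omega : set 'rV[R]_d) (f : 'rV[R]_d -> R) : Prop :=
  exists (M : nat) (fs : 'I_M.+1 -> 'rV[R]_d -> R) (Cs : 'I_M.+1 -> set 'rV[R]_d),
    [/\ forall i, affine_fun (fs i),
        forall i : 'I_M.+1, i != ord0 -> convex_area (Cs i),
        forall i j : 'I_M.+1, i != ord0 -> j != ord0 -> i != j ->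
          Cs i `&` Cs j = set0,
        Cs ord0 = Omega `\` [set x | exists i : 'I_M.+1, i != ord0 /\ Cs i x]
      & forall x, Omega x ->
          f x = \sum_(i < M.+1) indic_set (Cs i) x * fs i x].

Definition PLDC (f : 'rV[R]_d -> R) : Prop :=
  exists (K : nat) (alpha beta : 'I_K.+1 -> 'rV[R]_d) (c c' : 'I_K.+1 -> R),
    forall x,
      f x = \big[Num.max/(dotv (alpha ord0) x + c ord0)]_(k < K.+1)
                (dotv (alpha k) x + c k)
          - \big[Num.max/(dotv (beta ord0) x + c' ord0)]_(k < K.+1)
                (dotv (beta k) x + c' k).

End CALFDefs.

(* Main.v *)
Require Import Defs.
From HB Require Import structures.
From mathcomp Require Import all_boot all_order all_algebra.
From mathcomp Require Import boolp classical_sets reals.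
From mathcomp Require Import lra ring.
Set Implicit Arguments. Unset Strict Implicit.
Import Order.TTheory GRing.Theory Num.Theory.
Local Open Scope ring_scope.
Local Open Scope classical_set_scope.
Section Fit.
Variable R : realType.
Variables (d n : nat) (xs : 'I_n -> 'rV[R]_d) (ys : 'I_n -> R).
Hypothesis d_gt0 : (0 < d)%N.
Hypothesis hyp : forall i j, ys i != ys j -> xs i != xs j.

Lemma dotv_delta (j : 'I_d) (x : 'rV[R]_d) : dotv (delta_mx 0 j) x = x 0 j.
Proof.
rewrite /dotv (bigD1 j) //= big1 ?addr0.
  by rewrite mxE !eqxx mul1r.
by move=> i hij; rewrite mxE eqxx (negbTE hij) mul0r.
Qed.

Lemma dotvN (a x : 'rV[R]_d) : dotv (- a) x = - dotv a x.
Proof. by rewrite /dotv -sumrN; apply: eq_bigr => i _; rewrite mxE mulNr. Qed.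

Lemma empty_convex : convex_area (R:=R) (d:=d) set0.
Proof.
exists 1%N, (fun _ => 0), (fun _ => 1); split => //.
apply/funext => x; apply/propext; split => // /(_ ord0).
rewrite /dotv big1 ?add0r ?ler10 // => i _; by rewrite mxE mul0r.
Qed.

Lemma single_convex (p : 'rV[R]_d) : convex_area [set p].
Proof.
exists (d + d)%N,
  (fun k => match split k with inl j => delta_mx 0 j | inr j => - delta_mx 0 j end),
  (fun k => match split k with inl j => - p 0 j | inr j => p 0 j end).
split; first by rewrite addn_gt0 d_gt0.
apply/funext => x; apply/propext; split.
- move=> -> k; case: (split k) => j; rewrite ?dotvN dotv_delta; lra.
- move=> H; apply/matrixP => i j; rewrite [i]ord1.
  have h1 := H (unsplit (inl j)); have h2 := H (unsplit (inr j)).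
  rewrite !unsplitK ?dotvN !dotv_delta in h1 h2; lra.
Qed.

Definition first (j : 'I_n) : bool :=
  [forall j' : 'I_n, (j' < j)%N ==> (xs j' != xs j)].
Definition S (j : 'I_n) : set 'rV[R]_d := if first j then [set xs j] else set0.
Definition S0 : set 'rV[R]_d := setT `\` [set x | exists j : 'I_n, S j x].
Definition Cs (k : 'I_n.+1) : set 'rV[R]_d :=
  if unlift ord0 k is Some j then S j else S0.
Definition fsi (k : 'I_n.+1) : 'rV[R]_d -> R :=
  if unlift ord0 k is Some j then fun _ => ys j else fun _ => 0.
Definition ffit (x : 'rV[R]_d) : R := \sum_(k < n.+1) indic_set (Cs k) x * fsi k x.

Lemma S_uniq j j' x : S j x -> S j' x -> j = j'.
Proof.
rewrite /S; case hf: (first j) => //; case hf': (first j') => //.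
move=> /= -> e.
case: (ltngtP j j') => h.
- by move/forallP: hf' => /(_ j); rewrite h /= e eqxx.
- by move/forallP: hf => /(_ j'); rewrite h /= e eqxx.
- exact: val_inj.
Qed.

Lemma exists_first i : exists j, S j (xs i) /\ xs j = xs i.
Proof.
case: (@arg_minnP _ i (fun j => xs j == xs i) (fun j => nat_of_ord j)) => //.
move=> j /eqP hj hmin; exists j; split => //.
rewrite /S; have -> : first j.
  apply/forallP => j'; apply/implyP => hlt; apply/negP => /eqP e.
  have := hmin j'; rewrite e hj eqxx => /(_ isT); by rewrite leqNgt hlt.
by [].
Qed.

Lemma const_affine' (v : R) : affine_fun (fun _ : 'rV[R]_d => v).
Proof.
exists v, 0 => x; rewrite /dotv big1 ?addr0 // => i _; by rewrite mxE mul0r.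
Qed.

Lemma ffit_CALF : CALF setT ffit.
Proof.
exists n, fsi, Cs; split.
- by move=> k; rewrite /fsi; case: (unlift ord0 k) => *; apply: const_affine'.
- move=> k hk; rewrite /Cs; case: unliftP => [j _|e]; last by rewrite e eqxx in hk.
  rewrite /S; case: (first j); [exact: single_convex | exact: empty_convex].
- move=> i j hi hj hij; rewrite /Cs.
  case: unliftP => [a ea|e]; last by rewrite e eqxx in hi.
  case: unliftP => [b eb|e]; last by rewrite e eqxx in hj.
  apply/seteqP; split => x // [h1 h2].
  by move: hij; rewrite ea eb (S_uniq h1 h2) eqxx.
- rewrite {1}/Cs unlift_none /S0; congr (_ `\` _); apply/funext => x; apply/propext; split.
  + move=> [j h]; exists (lift ord0 j); split; first by rewrite eq_sym neq_lift.
    by rewrite /Cs liftK.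
  + move=> [k [hk]]; rewrite /Cs; case: unliftP => [j _ h|e]; last by rewrite e eqxx in hk.
    by exists j.
- by [].
Qed.

Lemma ffit_fit i : ffit (xs i) = ys i.
Proof.
have [j [hS hx]] := exists_first i.
rewrite /ffit (bigD1 (lift ord0 j)) //= big1 ?addr0.
  rewrite /Cs /fsi liftK /indic_set asboolT // mul1r.
  by case: (eqVneq (ys j) (ys i)) => // /hyp; rewrite hx eqxx.
move=> k hk; rewrite /indic_set asboolF ?mul0r //; rewrite /Cs.
case: unliftP => [j' e|e].
- move=> h; move: hk; by rewrite e (S_uniq h hS) eqxx.
- by move=> [_ /=]; apply; exists j.
Qed.

End Fit.
Section Aux.
Variable R : realType.

Lemma bigmax_ub (K : nat) (G : 'I_K.+1 -> R) k :
  G k <= \big[Num.max/G ord0]_(i < K.+1) G i.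
Proof. by rewrite (bigD1 k) //= le_max lexx. Qed.

Lemma bigmax_lub (K : nat) (G : 'I_K.+1 -> R) c :
  (forall k, G k <= c) -> \big[Num.max/G ord0]_(i < K.+1) G i <= c.
Proof.
move=> H; apply: (big_ind (fun v => v <= c)) => //.
by move=> x y hx hy; rewrite ge_max hx hy.
Qed.

Lemma term_le_sum (K : nat) (G : 'I_K -> R) k :
  (forall i, 0 <= G i) -> G k <= \sum_(i < K) G i.
Proof.
move=> H; rewrite (bigD1 k) //= lerDl; apply: sumr_ge0 => i _; exact: H.
Qed.

Definition pt (t : R) : 'rV[R]_1 := const_mx t.

Lemma dotv_pt (a : 'rV[R]_1) t : dotv a (pt t) = a 0 0 * t.
Proof. by rewrite /dotv big_ord1 mxE. Qed.

Lemma maxaff_lip (K : nat) (a : 'I_K.+1 -> 'rV[R]_1) (c : 'I_K.+1 -> R) s t :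
  \big[Num.max/(dotv (a ord0) (pt s) + c ord0)]_(k < K.+1) (dotv (a k) (pt s) + c k)
  <= \big[Num.max/(dotv (a ord0) (pt t) + c ord0)]_(k < K.+1) (dotv (a k) (pt t) + c k)
     + (\sum_(k < K.+1) `|a k 0 0|) * `|s - t|.
Proof.
apply: (@bigmax_lub K (fun k => dotv (a k) (pt s) + c k)) => k.
have h1 := @bigmax_ub K (fun k => dotv (a k) (pt t) + c k) k.
have h2 : `|a k 0 0| <= \sum_(k < K.+1) `|a k 0 0|.
  by apply: term_le_sum => i.
rewrite !dotv_pt in h1 *.
have -> : a k 0 0 * s + c k = (a k 0 0 * t + c k) + a k 0 0 * (s - t).
  by ring.
have h3 : a k 0 0 * (s - t) <= `|a k 0 0| * `|s - t|.
  by rewrite -normrM ler_norm.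
have h4 : `|a k 0 0| * `|s - t| <= (\sum_(k < K.+1) `|a k 0 0|) * `|s - t|.
  by apply: ler_wpM2r.
lra.
Qed.

Definition H1 : set 'rV[R]_1 := [set x | x 0 0 <= 0].
Definition Cs2 (i : 'I_2) : set 'rV[R]_1 :=
  if i == ord0 then setT `\` [set x | exists i : 'I_2, i != ord0 /\ H1 x] else H1.
Definition fs2 (i : 'I_2) : 'rV[R]_1 -> R := if i == ord0 then fun _ => 0 else fun _ => 1.
Definition f2 (x : 'rV[R]_1) : R := \sum_(i < 2) indic_set (Cs2 i) x * fs2 i x.

Lemma f2E x : f2 x = indic_set H1 x.
Proof. by rewrite /f2 big_ord_recl big_ord1 /fs2 /Cs2 /= mulr0 mulr1 add0r. Qed.

Lemma const_affine (v : R) : affine_fun (fun _ : 'rV[R]_1 => v).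
Proof.
exists v, 0 => x; rewrite /dotv big1 ?addr0 // => i _; by rewrite mxE mul0r.
Qed.

Lemma f2_CALF : CALF setT f2.
Proof.
exists 1%N, fs2, Cs2; split.
- by move=> i; rewrite /fs2; case: (i == ord0); apply: const_affine.
- move=> i hi; rewrite /Cs2 (negbTE hi).
  exists 1%N, (fun _ => const_mx 1), (fun _ => 0); split => //.
  rewrite /H1; apply/funext => x; apply/propext; split.
  + by move=> hx k; rewrite /dotv big_ord1 !mxE mul1r addr0.
  + by move=> /(_ ord0); rewrite /dotv big_ord1 !mxE mul1r addr0.
- move=> i j hi hj hij; exfalso; move/eqP: hij; apply; apply/val_inj.
  move: i j hi hj => [[|[|?]] ?] [[|[|?]] ?] //=.
- rewrite /Cs2 /=; congr (_ `\` _); apply/funext => x; apply/propext.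
  split=> -[i [hi hx]]; exists i; split => //; move: hx; by rewrite /Cs2 (negbTE hi).
- by [].
Qed.

Lemma f2_notPLDC : ~ PLDC f2.
Proof.
move=> [K [al [be [c [c' H]]]]].
set La := \sum_(k < K.+1) `|al k 0 0|.
set Lb := \sum_(k < K.+1) `|be k 0 0|.
have hLa : 0 <= La by apply: sumr_ge0.
have hLb : 0 <= Lb by apply: sumr_ge0.
set s := (La + Lb + 1)^-1.
have hs : 0 < s by rewrite invr_gt0; lra.
have h0 := H (pt 0). have h1 := H (pt s).
rewrite f2E /indic_set asboolT in h0; last by rewrite /H1 /pt /= mxE.
rewrite f2E /indic_set asboolF in h1; last by rewrite /H1 /pt /= mxE; apply/negP; rewrite -ltNge.
have A := @maxaff_lip K al c 0 s.
have B := @maxaff_lip K be c' s 0.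
rewrite -/La in A; rewrite -/Lb in B.
rewrite sub0r normrN gtr0_norm // in A.
rewrite subr0 gtr0_norm // in B.
have hlt : (La + Lb) * s < 1.
  by rewrite /s mulrC -(mulr1 1) ltr_pdivrMl ?mulr1; lra.
rewrite mulrDl in hlt.
lra.
Qed.
End Aux.

Theorem theorem1 (R : realType) :
  (forall (d n : nat) (xs : 'I_n -> 'rV[R]_d) (ys : 'I_n -> R),
      (0 < d)%N ->
      (forall i j : 'I_n, ys i != ys j -> xs i != xs j) ->
      exists f : 'rV[R]_d -> R,
        CALF setT f /\ (forall i : 'I_n, f (xs i) = ys i))
  /\
  (exists (d : nat) (f : 'rV[R]_d -> R),
      (0 < d)%N /\ CALF setT f /\ ~ PLDC f).
Proof.
split.
- move=> d n xs ys hd hyp; exists (ffit xs ys).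
  split; [exact: ffit_CALF | exact: ffit_fit].
- exists 1%N, (@f2 R); split => //; split; [exact: f2_CALF | exact: f2_notPLDC].
Qed.
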